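(* For all positive integers $\alpha,\beta,p$, $$C(\alpha,\beta,p)\ge\max\left\{\frac{C(\alpha,1,p)}{\beta},\frac{C(1,\beta,p)}{\alpha}\right\}.$$
   Context: Memory cells are binary; cell-state vectors of $n$ cells lie in $\{0,1\}^n$. A code on $n$ cells consists, for each write $i\ge1$, of a real $R_i\ge0$, an encoder $\mathcal{E}_i:\{1,\ldots,\lfloor2^{nR_i}\rfloor\}\times\{0,1\}^n\to\{0,1\}^n$ and decoder $\mathcal{D}_i$ with $\mathcal{D}_i(\mathcal{E}_i(m,\mathbf{u}))=m$ (both may depend on $i$). Starting from $\mathbf{v}_0=\mathbf{0}$, messages produce states $\mathbf{v}_i=\mathcal{E}_i(m_i,\mathbf{v}_{i-1})$. The code is $(\alpha,\beta,p)$-constrained if for every message sequence, every $i\ge0$ and every $1\le j\le n-\beta+1$, $|\{(k,\ell): v_{i+k,j+\ell}\ne v_{i+k+1,j+\ell}, 0\le k<\alpha, 0\le\ell<\beta\}|\le p$ (total rewrite cost, measured by Hamming distance between consecutive states, of any $\beta$ contiguous cells over any $\alpha$ consecutive rewrites is at most $p$). Rate: $\lim_{m\to\infty}\frac1m\sum_{i=1}^mR_i$. $C_n(\alpha,\beta,p)$ is the supremum of rates of $(\alpha,\beta,p)$-constrained codes on $n$ cells and $C(\alpha,\beta,p)=\lim_{n\to\infty}C_n(\alpha,\beta,p)$. *)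

(* Defs.v *)
From HB Require Import structures.
From mathcomp Require Import all_boot all_order all_algebra.
From mathcomp Require Import all_classical all_reals all_analysis.
Import numFieldNormedType.Exports.
Set Implicit Arguments. Unset Strict Implicit. Unset Printing Implicit Defensive.
Import Order.TTheory GRing.Theory Num.Theory.
Local Open Scope ring_scope.
Local Open Scope classical_set_scope.

Definition state (n : nat) := n.-tuple bool.

(* A code on n cells: for each write i >= 1 a rate R_i, an encoder E_i and a
   decoder D_i.  Messages are the naturals 1..floor(2^(n R_i)). *)
Record code (R : realType) (n : nat) := Code {
  rate_at : nat -> R;
  enc : nat -> nat -> state n -> state n;
  dec : nat -> state n -> nat
}.

Section Codes.
Variables (R : realType) (n : nat).

Definition nmsg (c : code R n) (i : nat) : nat :=
  Num.truncn (2 `^ (n%:R * rate_at c i)).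

Definition valid_code (c : code R n) : Prop :=
  forall i, (1 <= i)%N ->
    0 <= rate_at c i /\
    forall m u, (1 <= m <= nmsg c i)%N -> dec c i (enc c i m u) = m.

Definition msg_seq (c : code R n) (ms : nat -> nat) : Prop :=
  forall i, (1 <= i)%N -> (1 <= ms i <= nmsg c i)%N.

Fixpoint states (c : code R n) (ms : nat -> nat) (i : nat) : state n :=
  match i with
  | 0 => [tuple of nseq n false]
  | i'.+1 => enc c i'.+1 (ms i'.+1) (states c ms i')
  end.

Definition window_cost (c : code R n) (ms : nat -> nat)
    (alpha beta i j : nat) : nat :=
  \sum_(k < alpha) \sum_(l < beta)
     (nth false (states c ms (i + k)) (j + l)
        != nth false (states c ms (i + k).+1) (j + l)).

(* (alpha,beta,p)-constrained (windows: 0 <= j, j + beta <= n, i.e. the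
   paper's 1 <= j <= n - beta + 1) *)
Definition constrained (alpha beta p : nat) (c : code R n) : Prop :=
  forall ms, msg_seq c ms ->
  forall i j, (j + beta <= n)%N -> (window_cost c ms alpha beta i j <= p)%N.

Definition has_rate (c : code R n) (r : R) : Prop :=
  (fun m : nat => (\sum_(1 <= i < m.+2) rate_at c i) / (m.+1)%:R) @ \oo --> r.

Definition Cn (alpha beta p : nat) : R :=
  sup [set r | exists c : code R n,
         [/\ valid_code c, constrained alpha beta p c & has_rate c r]].

End Codes.

Definition Cseq (R : realType) (alpha beta p : nat) : nat -> R :=
  fun n => Cn R n alpha beta p.

Definition Ccap (R : realType) (alpha beta p : nat) : R :=
  limn (Cseq R alpha beta p).

(* Main.v *)
Require Import Defs.
From HB Require Import structures.
From mathcomp Require Import all_boot all_order all_algebra.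
From mathcomp Require Import all_classical all_reals all_analysis.
From mathcomp Require Import zify ring lra.
Import Order.TTheory GRing.Theory Num.Theory numFieldNormedType.Exports.
Set Implicit Arguments. Unset Strict Implicit.
Local Open Scope ring_scope.
Local Open Scope classical_set_scope.

Section S.
Variable R : realType.

Definition RS n a b p : set R := [set r | exists c : Defs.code R n,
         [/\ valid_code c, constrained a b p c & has_rate c r]].

Lemma nmsg_le n (c : Defs.code R n) i : (1 <= i)%N -> valid_code c -> (nmsg c i <= 2 ^ n)%N.
Proof.
move=> i1 /(_ i i1) [_ hd].
pose u0 : state n := [tuple of nseq n false].
pose f (k : 'I_(nmsg c i)) : state n := enc c i k.+1 u0.
have fi : injective f.
  move=> k1 k2 /(congr1 (dec c i)); rewrite /f !hd; last 2 first.
  - by rewrite ltn_ord.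
  - by rewrite ltn_ord.
  by move=> [] /val_inj.
by have := leq_card _ fi; rewrite card_ord card_tuple card_bool.
Qed.

Lemma rate_le2 n (c : Defs.code R n) i : (0 < n)%N -> (1 <= i)%N -> valid_code c ->
  rate_at c i <= 2.
Proof.
move=> n0 i1 vc; have := nmsg_le i1 vc; rewrite /nmsg.
have r0 := (vc i i1).1.
move=> hle; rewrite leNgt; apply/negP => H; move: hle; apply/negP.
rewrite -ltnNge truncn_gt_nat.
have -> : ((2 ^ n).+1%:R : R) = 2 `^ (n%:R * 1) + 1.
  by rewrite mulr1 powR_mulrn // -natrX -addn1 natrD.
apply: (@le_trans _ _ (2 `^ (n%:R * 2))); last first.
  apply: ler_powR; first by rewrite ler1n.
  by rewrite ler_pM2l ?ltW // ltr0n.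
rewrite mulr1 -natrM !powR_mulrn // -!natrX natr1 ler_nat.
rewrite expnM.
have : (2 <= 2 ^ n)%N.
  by case: (n) n0 => // n' _; rewrite expnS; have := expn_gt0 2 n'; lia.
move: (2 ^ n)%N => k k1; rewrite expnS expn1. nia.
Qed.

Lemma RS_ub n a b p : (0 < n)%N -> ubound (RS n a b p) 2.
Proof.
move=> n0 r [c [vc _ hr]].
have hl := cvg_lim (@Rhausdorff R) hr.
rewrite -hl; apply: limr_le; first by apply/cvg_ex; exists r.
apply: nearW => m.
rewrite ler_pdivrMr ?ltr0n //.
apply: (@le_trans _ _ (\sum_(1 <= i < m.+2) (2:R))).
  by apply: ler_sum_nat => i /andP[i1 _]; apply: rate_le2.
by rewrite sumr_const_nat subn1 /= mulr_natr.
Qed.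

Definition zcode n : Defs.code R n := Code (fun _ => 0) (fun _ _ u => u) (fun _ _ => 1%N).

Lemma zcode_in n a b p : RS n a b p 0.
Proof.
exists (zcode n); split.
- move=> i i1; split => // m u.
  by rewrite /nmsg /= mulr0 powRr0 truncn1 => /andP[m1 m2]; apply/eqP; rewrite eqn_leq m1 m2.
- move=> ms _ i j _; rewrite /window_cost big1 // => k _; rewrite big1 // => l _.
  by rewrite /= eqxx.
- rewrite /has_rate.
  have -> : (fun m : nat => (\sum_(1 <= i < m.+2) rate_at (zcode n) i) / (m.+1)%:R) = fun=> 0.
    by apply: funext => m; rewrite big1 ?mul0r.
  exact: cvg_cst.
Qed.

Lemma sup_scale (A B : set R) (k : R) : 0 < k -> B 0 -> ubound B 2 ->
  (forall a, A a -> B (a / k)) -> sup A / k <= sup B.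
Proof.
move=> k0 B0 Bub hAB.
have hB : has_sup B by split; [exists 0 | exists 2].
case: (pselect (has_sup A)) => [[[a Aa] _]|nA].
  rewrite ler_pdivrMr //; apply: ge_sup; first by exists a.
  move=> y Ay; rewrite -ler_pdivrMr //; exact: sup_upper_bound (hAB _ Ay).
by rewrite sup_out // mul0r; apply: sup_upper_bound.
Qed.

Definition mkst k (f : nat -> bool) : state k :=
  @Tuple k bool (mkseq f k) (introT eqP (size_mkseq f k)).

Lemma nth_mkst k f j : (j < k)%N -> nth false (mkst k f) j = f j.
Proof. by move=> jk; rewrite /= nth_mkseq. Qed.

Lemma tuple_ext k (u v : state k) : (forall j, (j < k)%N -> nth false u j = nth false v j) -> u = v.
Proof.
move=> h; apply: val_inj; apply: (eq_from_nth (x0 := false)); first by rewrite !size_tuple.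
by move=> j; rewrite size_tuple; apply: h.
Qed.

Lemma sum_single d (F : 'I_d -> nat) s P :
  (forall l : 'I_d, ~~ (d %| s + l)%N -> F l = 0%N) ->
  (forall l : 'I_d, (d %| s + l)%N -> (F l <= P)%N) -> (\sum_(l < d) F l <= P)%N.
Proof.
move=> h0 h1; case: (pickP (fun l : 'I_d => (d %| s + l)%N)) => [l0 hl0|none].
  rewrite (bigD1 l0) //= big1 ?addn0 ?h1 // => l nl.
  apply: h0; apply: contra nl => dl; apply/eqP/val_inj => /=.
  move: dl hl0; rewrite /dvdn => /eqP e1 /eqP e2.
  have := eqn_modDl s l l0 d; rewrite e1 e2 eqxx !modn_small //.
  by move=> /esym/eqP.
by rewrite big1 // => l _; apply: h0; rewrite none.
Qed.

Section Beta.
Variables (b m : nat).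
Hypothesis b0 : (0 < b)%N.

Definition compress (u : state (m * b)) : state m := mkst m (fun l => nth false u (l * b)).
Definition spread (v : state m) : state (m * b) :=
  mkst (m * b) (fun j => (b %| j)%N && nth false v (j %/ b)).

Lemma nth_spread v j : nth false (spread v) j = (b %| j)%N && nth false v (j %/ b).
Proof.
case: (ltnP j (m * b)) => hj; first by rewrite nth_mkst.
rewrite nth_default ?size_tuple // nth_default ?size_tuple ?andbF //.
by rewrite leqNgt ltn_divLR // -leqNgt.
Qed.

Lemma compress_spread v : compress (spread v) = v.
Proof.
apply: tuple_ext => l hl; rewrite nth_mkst // nth_spread mulnK // dvdn_mull //.
Qed.

Definition bcode (c : Defs.code R m) : Defs.code R (m * b) :=
  Code (fun i => rate_at c i / b%:R) (fun i msg u => spread (enc c i msg (compress u)))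
    (fun i s => dec c i (compress s)).

Lemma nmsg_b c i : nmsg (bcode c) i = nmsg c i.
Proof.
rewrite /nmsg /=; congr (Num.truncn (2 `^ _)).
have : (b%:R : R) != 0 by rewrite pnatr_eq0 -lt0n.
by move=> hb; rewrite natrM; field.
Qed.

Lemma states_b c ms i : states (bcode c) ms i = spread (states c ms i).
Proof.
elim: i => [|i IH] /=.
  apply: tuple_ext => j hj; rewrite nth_spread /= !nth_nseq hj.
  by case: ifP; rewrite andbF.
by rewrite IH compress_spread.
Qed.

Lemma RS_b a p r : RS m a 1 p r -> RS (m * b) a b p (r / b%:R).
Proof.
move=> [c [vc cc hr]]; exists (bcode c); split.
- move=> i i1; have [r0 hd] := vc i i1; split.
    by rewrite /= divr_ge0 // ler0n.
  by move=> msg u; rewrite nmsg_b /= compress_spread; apply: hd.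
- move=> ms hms i j hj.
  have hms' : msg_seq c ms by move=> k k1; rewrite -nmsg_b; apply: hms.
  rewrite /window_cost exchange_big.
  apply (sum_single (F := fun l : 'I_b => (\sum_(k < a)
   (nth false (states (bcode c) ms (i + k)) (j + l)
      != nth false (states (bcode c) ms (i + k).+1) (j + l)))%N) (s := j)); move=> l.
    move=> nd; apply: big1 => k _; rewrite !states_b !nth_spread.
    by rewrite (negbTE nd).
  move=> dv; apply: (@leq_trans (window_cost c ms a 1 i ((j + l) %/ b))).
    rewrite /window_cost; apply: leq_sum => k _.
    by rewrite big_ord1 addn0 !states_b !nth_spread dv.
  apply: cc => //.
  rewrite addn1 ltn_divLR //; apply: leq_trans hj.
  by rewrite ltn_add2l.
- rewrite /has_rate.
  have -> : (fun k : nat => (\sum_(1 <= i < k.+2) rate_at (bcode c) i) / (k.+1)%:R) =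
     (fun k => (\sum_(1 <= i < k.+2) rate_at c i) / (k.+1)%:R * b%:R^-1).
    by apply: funext => k; rewrite /= -mulr_suml mulrAC.
  exact: cvgMr_tmp.
Qed.

Lemma Cn_b a p : (0 < m)%N -> Cn R m a 1 p / b%:R <= Cn R (m * b) a b p.
Proof.
move=> m0; apply: sup_scale.
- by rewrite ltr0n.
- exact: zcode_in.
- by apply: RS_ub; rewrite muln_gt0 m0.
- by move=> r; apply: RS_b.
Qed.
End Beta.

Section Alpha.
Variables (a n : nat).
Hypothesis a0 : (0 < a)%N.

Definition acode (c : Defs.code R n) : Defs.code R n :=
  Code (fun i => if (a %| i)%N then rate_at c (i %/ a) else 0)
    (fun i msg u => if (a %| i)%N then enc c (i %/ a) msg u else u)
    (fun i s => if (a %| i)%N then dec c (i %/ a) s else 1%N).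

Lemma nmsg_a c i : nmsg (acode c) i = if (a %| i)%N then nmsg c (i %/ a) else 1%N.
Proof.
by rewrite /nmsg /=; case: ifP => // _; rewrite mulr0 powRr0 truncn1.
Qed.

Lemma states_a c ms i :
  states (acode c) ms i = states c (fun k => ms (k * a)%N) (i %/ a).
Proof.
elim: i => [|i IH]; first by rewrite div0n.
rewrite /= IH; case: ifP => dv.
  have e1 : (i.+1 %/ a = (i %/ a).+1)%N by rewrite divnS // dv.
  rewrite e1 /=; congr (enc c _ _ _); by rewrite -e1 divnK.
by rewrite divnS // dv.
Qed.

Lemma sum_a c M : \sum_(1 <= i < M.+1) rate_at (acode c) i =
  \sum_(1 <= k < (M %/ a).+1) rate_at c k.
Proof.
elim: M => [|M IH]; first by rewrite div0n !big_geq.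
rewrite big_nat_recr //= IH (divnS _ a0); case dv: (a %| M.+1)%N.
  by rewrite add1n [in RHS]big_nat_recr.
by rewrite add0n addr0.
Qed.

Lemma RS_a b p r : RS n 1 b p r -> RS n a b p (r / a%:R).
Proof.
move=> [c [vc cc hr]]; exists (acode c); split.
- move=> i i1; rewrite /=; case: ifP => dv.
    have k1 : (1 <= i %/ a)%N by rewrite divn_gt0 // dvdn_leq.
    have [r0 hd] := vc _ k1; split => // msg u.
    by rewrite nmsg_a dv /= ?dv; apply: hd.
  split => // msg u; rewrite nmsg_a dv /= ?dv => /andP[h1 h2]; lia.
- move=> ms' hms' i j hj.
  pose ms k := ms' (k * a)%N.
  have hms : msg_seq c ms.
    move=> k k1; have := hms' (k * a)%N; rewrite nmsg_a dvdn_mull // mulnK //.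
    by apply; rewrite muln_gt0 k1.
  rewrite /window_cost.
  apply (sum_single (F := fun k : 'I_a => (\sum_(l < b)
   (nth false (states (acode c) ms' (i + k)) (j + l)
      != nth false (states (acode c) ms' (i + k).+1) (j + l)))%N) (s := i.+1)); move=> k.
    rewrite addSn => nd; apply: big1 => l _.
    by rewrite [states _ _ (i + k).+1]/= (negbTE nd) eqxx.
  rewrite addSn => dv.
  apply: (@leq_trans (window_cost c ms 1 b ((i + k) %/ a) j)); last exact: cc.
  rewrite /window_cost big_ord1 addn0 !states_a (divnS _ a0) dv add1n.
  exact: leqnn.
- rewrite /has_rate.
  have -> : (fun k : nat => (\sum_(1 <= i < k.+2) rate_at (acode c) i) / (k.+1)%:R) =
     (fun k => (\sum_(1 <= i < (k.+1 %/ a).+1) rate_at c i) / (k.+1)%:R).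
    by apply: funext => k; rewrite sum_a.
  pose g k := (k.+1 %/ a - 1)%N.
  have hg : g @ \oo --> \oo.
    have := cvg_comp _ _ (cvg_comp _ _ (cvg_addnr 1) (cvg_divnr a a0)) (cvg_subnr 1).
    apply: cvg_trans; apply: near_eq_cvg; apply: nearW => k.
    by rewrite /g /= addn1.
  have hu := cvg_comp _ _ hg hr.
  have hh : (fun k => ((k.+1 %/ a)%:R / (k.+1)%:R : R)) @ \oo --> (a%:R^-1 : R).
    apply: (squeeze_cvgr (f := fun k => a%:R^-1 - (k.+1)%:R^-1) (h := fun _ => a%:R^-1)).
    - apply: nearW => k; apply/andP; split.
        have H : ((k.+1)%:R : R) <= (k.+1 %/ a).+1%:R * a%:R.
          by rewrite -natrM ler_nat ltnW // ltn_ceil.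
        have e : (a%:R^-1 - (k.+1)%:R^-1 : R) = ((k.+1)%:R / a%:R - 1) / (k.+1)%:R.
          by field; rewrite [1 + _]addrC natr1 !pnatr_eq0 -?lt0n ?a0.
        rewrite e ler_pdivrMr ?ltr0n // divfK ?pnatr_eq0 // lerBlDr.
        by rewrite ler_pdivrMr ?ltr0n // natr1.
      rewrite ler_pdivrMr ?ltr0n // mulrC ler_pdivlMr ?ltr0n //.
      by rewrite -natrM ler_nat leq_divM.
    - rewrite -[X in _ --> X]subr0; apply: cvgB; first exact: cvg_cst.
      exact: cvg_harmonic.
    - exact: cvg_cst.
  have hM := cvgM hu hh.
  apply: (cvg_trans _ (hM _)); apply: near_eq_cvg.
  exists a => // k /= hk.
  have K1 : (0 < k.+1 %/ a)%N by rewrite divn_gt0 // ltnW.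
  rewrite /g subn1 prednK // mulrA divfK // pnatr_eq0 -lt0n //.
Qed.

Lemma Cn_a b p : (0 < n)%N -> Cn R n 1 b p / a%:R <= Cn R n a b p.
Proof.
move=> n0; apply: sup_scale.
- by rewrite ltr0n.
- exact: zcode_in.
- exact: RS_ub.
- by move=> r; apply: RS_a.
Qed.
End Alpha.
End S.

Unset Implicit Arguments.
Theorem theorem8 (R : realType) (alpha beta p : nat)
  (halpha : (0 < alpha)%N) (hbeta : (0 < beta)%N) (hp : (0 < p)%N)
  (cv_ab : cvgn (Cseq R alpha beta p))
  (cv_a1 : cvgn (Cseq R alpha 1 p))
  (cv_1b : cvgn (Cseq R 1 beta p)) :
  Num.max (Ccap R alpha 1 p / beta%:R) (Ccap R 1 beta p / alpha%:R)
    <= Ccap R alpha beta p.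
Proof.
rewrite ge_max; apply/andP; split.
  have hs := cvg_comp _ _ (cvg_mulnr beta hbeta) cv_ab.
  have hw := cvgMr_tmp (b := (beta%:R^-1 : R)) cv_a1.
  rewrite -(cvg_lim (@Rhausdorff R) (hw _)) /Ccap -(cvg_lim (@Rhausdorff R) hs).
  apply: ler_lim.
  - by apply/cvg_ex; eexists; exact: (hw _).
  - by apply/cvg_ex; eexists; exact: hs.
  - exists 1%N => // m /= hm; exact: Cn_b.
have hw := cvgMr_tmp (b := (alpha%:R^-1 : R)) cv_1b.
rewrite -(cvg_lim (@Rhausdorff R) (hw _)) /Ccap.
apply: ler_lim.
- by apply/cvg_ex; eexists; exact: (hw _).
- exact: cv_ab.
- exists 1%N => // m /= hm; exact: Cn_a.
Qed.
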